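(* For every finite label set $\Delta$ there is an MSO formula $\Psi(X)$ over $(\Sigma,\Delta)$ ($\Sigma$ a singleton) with one free second-order variable $X$ such that for every Cayley graph $G$ of a finitely generated group with generating set labeled by $\Delta$, and every assignment $\alpha$, $(G,\alpha)\models\Psi(X)$ if and only if $\alpha(X)$ is an infinite set of vertices.
   Context: The Cayley graph of a finitely generated group $\Gamma$ with finite generating set $\Delta$ (closed under inverses) is the labeled graph with vertex set $\Gamma$, a single vertex label, and edge relations $E_\delta=\{(\gamma,\gamma\delta):\gamma\in\Gamma\}$ for $\delta\in\Delta$. MSO formulas over $(\Sigma,\Delta)$: first-order (vertex) and second-order (vertex set) variables, atomic formulas $x\,L\,\sigma$, $x\,E_\delta\,x'$ (there is a $\delta$-edge from $x$ to $x'$), $x=x'$, $x\in X$, Boolean connectives and quantifiers over both kinds, standard semantics. *)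

(* Defs.v *)
From Stdlib Require Import List PeanoNat.
From mathcomp Require Import all_boot.

Record AbsGroup := {
  carrier :> Type;
  gmul : carrier -> carrier -> carrier;
  gone : carrier;
  ginv : carrier -> carrier;
  gmulA : forall x y z, gmul x (gmul y z) = gmul (gmul x y) z;
  gmul1l : forall x, gmul gone x = x;
  gmul1r : forall x, gmul x gone = x;
  gmulVl : forall x, gmul (ginv x) x = gone;
  gmulVr : forall x, gmul x (ginv x) = gone
}.


Definition is_subgroup {G : AbsGroup} (P : G -> Prop) : Prop :=
  P (gone G) /\ (forall x y, P x -> P y -> P (gmul G x y)) /\
  (forall x, P x -> P (ginv G x)).

Definition generates {G : AbsGroup} (S : G -> Prop) : Prop :=
  forall P : G -> Prop, is_subgroup P -> (forall s, S s -> P s) -> forall g, P g.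

Definition labelled_generating_set {G : AbsGroup} {Delta : finType}
  (gen : Delta -> G) : Prop :=
  injective gen /\
  (forall d, exists d', gen d' = ginv G (gen d)) /\
  generates (fun g => exists d, gen d = g).

(* First-order variables and second-order variables are both indexed by nat,
   in separate namespaces. *)
Inductive mso (Sigma Delta : Type) : Type :=
| FLab : nat -> Sigma -> mso Sigma Delta
| FEdge : Delta -> nat -> nat -> mso Sigma Delta
| FEq : nat -> nat -> mso Sigma Delta
| FIn : nat -> nat -> mso Sigma Delta
| FNot : mso Sigma Delta -> mso Sigma Delta
| FAnd : mso Sigma Delta -> mso Sigma Delta -> mso Sigma Delta
| FOr : mso Sigma Delta -> mso Sigma Delta -> mso Sigma Delta
| FEx1 : nat -> mso Sigma Delta -> mso Sigma Delta
| FAll1 : nat -> mso Sigma Delta -> mso Sigma Delta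
| FEx2 : nat -> mso Sigma Delta -> mso Sigma Delta
| FAll2 : nat -> mso Sigma Delta -> mso Sigma Delta.

Arguments FLab {Sigma Delta}.
Arguments FEdge {Sigma Delta}.
Arguments FEq {Sigma Delta}.
Arguments FIn {Sigma Delta}.
Arguments FNot {Sigma Delta}.
Arguments FAnd {Sigma Delta}.
Arguments FOr {Sigma Delta}.
Arguments FEx1 {Sigma Delta}.
Arguments FAll1 {Sigma Delta}.
Arguments FEx2 {Sigma Delta}.
Arguments FAll2 {Sigma Delta}.

Fixpoint fo_free {Sigma Delta : Type} (f : mso Sigma Delta) (n : nat) : Prop :=
  match f with
  | FLab x _ => n = x
  | FEdge _ x y => n = x \/ n = y
  | FEq x y => n = x \/ n = y
  | FIn x _ => n = x
  | FNot g => fo_free g n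
  | FAnd g h => fo_free g n \/ fo_free h n
  | FOr g h => fo_free g n \/ fo_free h n
  | FEx1 x g => n <> x /\ fo_free g n
  | FAll1 x g => n <> x /\ fo_free g n
  | FEx2 _ g => fo_free g n
  | FAll2 _ g => fo_free g n
  end.

Fixpoint so_free {Sigma Delta : Type} (f : mso Sigma Delta) (n : nat) : Prop :=
  match f with
  | FLab _ _ => False
  | FEdge _ _ _ => False
  | FEq _ _ => False
  | FIn _ X => n = X
  | FNot g => so_free g n
  | FAnd g h => so_free g n \/ so_free h n
  | FOr g h => so_free g n \/ so_free h n
  | FEx1 _ g => so_free g n
  | FAll1 _ g => so_free g n
  | FEx2 X g => n <> X /\ so_free g n
  | FAll2 X g => n <> X /\ so_free g n
  end.

Definition upd {A : Type} (a : nat -> A) (x : nat) (v : A) : nat -> A :=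
  fun n => if Nat.eqb n x then v else a n.

Record labelled_graph (Sigma Delta : Type) := {
  vertex : Type;
  vlabel : vertex -> Sigma;
  edge : Delta -> vertex -> vertex -> Prop
}.
Arguments vertex {Sigma Delta}.
Arguments vlabel {Sigma Delta}.
Arguments edge {Sigma Delta}.

Fixpoint sat {Sigma Delta : Type} (Gr : labelled_graph Sigma Delta)
  (a1 : nat -> vertex Gr) (a2 : nat -> vertex Gr -> Prop)
  (f : mso Sigma Delta) : Prop :=
  match f with
  | FLab x s => vlabel Gr (a1 x) = s
  | FEdge d x y => edge Gr d (a1 x) (a1 y)
  | FEq x y => a1 x = a1 y
  | FIn x X => a2 X (a1 x)
  | FNot g => ~ sat Gr a1 a2 g
  | FAnd g h => sat Gr a1 a2 g /\ sat Gr a1 a2 h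
  | FOr g h => sat Gr a1 a2 g \/ sat Gr a1 a2 h
  | FEx1 x g => exists v, sat Gr (upd a1 x v) a2 g
  | FAll1 x g => forall v, sat Gr (upd a1 x v) a2 g
  | FEx2 X g => exists S, sat Gr a1 (upd a2 X S) g
  | FAll2 X g => forall S, sat Gr a1 (upd a2 X S) g
  end.

Definition cayley_graph {G : AbsGroup} {Delta : Type} (gen : Delta -> G)
  : labelled_graph unit Delta :=
  {| vertex := carrier G;
     vlabel := fun _ => tt;
     edge := fun d x y => y = gmul G x (gen d) |}.

Definition finite_set {V : Type} (A : V -> Prop) : Prop :=
  exists l : list V, forall v, A v -> List.In v l.

Definition infinite_set {V : Type} (A : V -> Prop) : Prop := ~ finite_set A.

(* Main.v *)
Require Import Defs.
From mathcomp Require Import all_boot zify.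
From Stdlib Require Import Classical.

Section F.
Context {D : finType}.
Definition ffalse (x : nat) : mso unit D := FNot (FEq x x).
Definition adj_list (l : seq D) (x y : nat) : mso unit D :=
  foldr (fun d f => FOr (FEdge d x y) f) (ffalse x) l.
Definition Adj x y := adj_list (enum D) x y.
End F.
Arguments Adj : simpl never.

Lemma fo_free_adj (D : finType) (l : seq D) x y n : fo_free (adj_list l x y) n -> n = x \/ n = y.
Proof. elim: l => [|d l IH] /=; [tauto|]. intros [H|H]; auto. Qed.
Lemma so_free_adj (D : finType) (l : seq D) x y n : ~ so_free (adj_list l x y) n.
Proof. elim: l => [|d l IH] /=; tauto. Qed.

Lemma in_In (T : eqType) (s : seq T) x : x \in s -> List.In x s.
Proof. elim: s => [|a s IH] //=. rewrite in_cons => /orP [/eqP ->|H]; auto. Qed.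

Lemma sat_adj_list (D : finType) (Gr : labelled_graph unit D) (l : seq D) a1 a2 x y :
  sat Gr a1 a2 (adj_list l x y) <-> exists d, List.In d l /\ edge Gr d (a1 x) (a1 y).
Proof.
  elim: l => [|d l IH] /=. { split; [tauto| intros [? [[] _]]]. }
  rewrite IH. split.
  - intros [H|[d' [H1 H2]]]; eauto.
  - intros [d' [[<-|H1] H2]]; eauto.
Qed.

Lemma sat_Adj (D : finType) (Gr : labelled_graph unit D) a1 a2 x y :
  sat Gr a1 a2 (Adj x y) <-> exists d, edge Gr d (a1 x) (a1 y).
Proof.
  unfold Adj; rewrite sat_adj_list. split; [intros [d [_ H]]; eauto|].
  intros [d H]; exists d; split; auto. apply in_In. by rewrite mem_enum.
Qed.

Section F.
Context {D : finType}.
Definition Down : mso unit D := FAnd (Adj 1 2) (FOr (FAnd (FIn 1 3) (FIn 2 4)) (FOr (FAnd (FIn 1 4) (FIn 2 5)) (FAnd (FIn 1 5) (FIn 2 3)))).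
Definition SubXY : mso unit D := FAll1 1 (FOr (FNot (FIn 1 0)) (FIn 1 1)).
Definition Closed : mso unit D := FAll1 1 (FAll1 2 (FOr (FNot (FAnd (FIn 1 2) (FAnd (FIn 2 1) Down))) (FIn 2 2))).
Definition Reach : mso unit D := FAll2 2 (FOr (FNot (FIn 0 2)) (FOr (FNot Closed) (FAll1 1 (FOr (FNot (FIn 1 1)) (FIn 1 2))))).
Definition SubSY : mso unit D := FAll1 1 (FOr (FNot (FIn 1 2)) (FIn 1 1)).
Definition WFf : mso unit D := FAll2 2 (FOr (FNot (FAnd SubSY (FEx1 1 (FIn 1 2)))) (FEx1 1 (FAnd (FIn 1 2) (FAll1 2 (FNot (FAnd (FIn 2 2) Down)))))).
Definition Cert : mso unit D := FEx2 3 (FEx2 4 (FEx2 5 (FEx1 0 (FAnd (FIn 0 1) (FAnd Reach WFf))))).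
Definition Psi : mso unit D := FNot (FEx2 1 (FAnd SubXY Cert)).
End F.

Lemma Psi_fo (D : finType) n : ~ fo_free (@Psi D) n.
Proof.
  rewrite /Psi /Cert /Reach /WFf /SubXY /Closed /SubSY /Down /=.
  have := @fo_free_adj D (enum D) 1 2 n. rewrite /Adj. intuition.
Qed.
Lemma Psi_so (D : finType) n : so_free (@Psi D) n -> n = 0.
Proof.
  rewrite /Psi /Cert /Reach /WFf /SubXY /Closed /SubSY /Down /=.
  have := @so_free_adj D (enum D) 1 2 n. rewrite /Adj. intuition.
Qed.

Lemma imp_or (A B : Prop) : (~A \/ B) <-> (A -> B).
Proof. split; [tauto|]. intros H. destruct (classic A); tauto. Qed.

Definition downP {D : finType} (Gr : labelled_graph unit D) (C3 C4 C5 : vertex Gr -> Prop) v w :=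
  (exists d, edge Gr d v w) /\ ((C3 v /\ C4 w) \/ (C4 v /\ C5 w) \/ (C5 v /\ C3 w)).

Section S.
Context {D : finType} (Gr : labelled_graph unit D).

Lemma sat_Down a1 a2 : sat Gr a1 a2 Down <-> downP Gr (a2 3) (a2 4) (a2 5) (a1 1) (a1 2).
Proof. rewrite /Down /=. rewrite sat_Adj. reflexivity. Qed.

Lemma sat_Closed a1 a2 : sat Gr a1 a2 Closed <->
  forall v w, a2 2 v -> a2 1 w -> downP Gr (a2 3) (a2 4) (a2 5) v w -> a2 2 w.
Proof.
  rewrite /Closed /=. setoid_rewrite sat_Down. rewrite /upd /=.
  repeat setoid_rewrite imp_or. split; intros H v w; specialize (H v w); tauto.
Qed.

Lemma sat_Reach a1 a2 : sat Gr a1 a2 Reach <->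
  forall S, S (a1 0) -> (forall v w, S v -> a2 1 w -> downP Gr (a2 3) (a2 4) (a2 5) v w -> S w) ->
     forall v, a2 1 v -> S v.
Proof.
  rewrite /Reach /=. setoid_rewrite sat_Closed. rewrite /upd /=.
  repeat setoid_rewrite imp_or. reflexivity.
Qed.

Lemma sat_WF a1 a2 : sat Gr a1 a2 WFf <->
  forall S, (forall v, S v -> a2 1 v) -> (exists v, S v) ->
    exists v, S v /\ forall w, ~ (S w /\ downP Gr (a2 3) (a2 4) (a2 5) v w).
Proof.
  rewrite /WFf /SubSY /=. setoid_rewrite sat_Down. rewrite /upd /=.
  repeat setoid_rewrite imp_or. split; intros H S; specialize (H S); tauto.
Qed.

Lemma sat_Psi a1 a2 : sat Gr a1 a2 Psi <->
  ~ exists Y, (forall v, a2 0 v -> Y v) /\ exists C3 C4 C5 r, Y r /\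
    (forall S, S r -> (forall v w, S v -> Y w -> downP Gr C3 C4 C5 v w -> S w) ->
     forall v, Y v -> S v) /\
    (forall S, (forall v, S v -> Y v) -> (exists v, S v) ->
    exists v, S v /\ forall w, ~ (S w /\ downP Gr C3 C4 C5 v w)).
Proof.
  rewrite /Psi /Cert /SubXY /=. setoid_rewrite sat_Reach. setoid_rewrite sat_WF.
  rewrite /upd /=. repeat setoid_rewrite imp_or. reflexivity.
Qed.
End S.

Inductive rtc {T} (R : T -> T -> Prop) (x : T) : T -> Prop :=
| rtc0 : rtc R x x
| rtcS y z : R x y -> rtc R y z -> rtc R x z.

Lemma rtc_snoc {T} (R : T -> T -> Prop) x y z : rtc R x y -> R y z -> rtc R x z.
Proof. induction 1; intros; [eapply rtcS; [eauto|constructor]| eapply rtcS; eauto]. Qed.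

Lemma cert_finite (G : AbsGroup) (D : finType) (gen : D -> G) (Y C3 C4 C5 : G -> Prop) r :
  Y r ->
  (forall S : G -> Prop, S r -> (forall v w, S v -> Y w -> downP (cayley_graph gen) C3 C4 C5 v w -> S w) ->
     forall v, Y v -> S v) ->
  (forall S : G -> Prop, (forall v, S v -> Y v) -> (exists v, S v) ->
    exists v, S v /\ forall w, ~ (S w /\ downP (cayley_graph gen) C3 C4 C5 v w)) ->
  finite_set Y.
Proof.
  intros Yr HR HW.
  set step := fun v w => Y w /\ downP (cayley_graph gen) C3 C4 C5 v w.
  have HY : forall v, Y v -> rtc step r v.
  { apply HR; [constructor|]. intros v w Hv Yw Hd. eapply rtc_snoc; eauto. split; auto. }
  have Hfin : forall v, Y v -> finite_set (rtc step v).
  { apply NNPP => Hn. apply not_all_ex_not in Hn as [v0 Hv0].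
    have [v [[Yv Hv] Hmin]] := HW (fun v => Y v /\ ~ finite_set (rtc step v))
       (fun v H => proj1 H) (ex_intro _ v0 (conj (proj1 (imply_to_and _ _ Hv0)) (proj2 (imply_to_and _ _ Hv0)))).
    apply Hv.
    have col : forall l : seq D, exists L, forall d, List.In d l -> step v (gmul G v (gen d)) ->
        forall u, rtc step (gmul G v (gen d)) u -> List.In u L.
    { elim => [|d l [L HL]]; first by exists nil.
      destruct (classic (step v (gmul G v (gen d)))) as [Hs|Hs].
      - have : finite_set (rtc step (gmul G v (gen d))).
        { apply NNPP => Hnf. apply (Hmin (gmul G v (gen d))). split; [split; [apply Hs|exact Hnf]| apply Hs]. }
        intros [L' HL']. exists (L' ++ L). intros d' [<-|Hin] Hs' u Hu; apply List.in_or_app; [left; auto| right; eauto].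
      - exists L. intros d' [<-|Hin] Hs' u Hu; [contradiction| eauto]. }
    have [L HL] := col (enum D).
    exists (v :: L). intros u Hu. inversion Hu as [|w u' Hs Hw]; subst; [left; auto|right].
    destruct Hs as [Yw [[d Hd] Hc]]. simpl in Hd. subst w.
    apply (HL d); [apply in_In; by rewrite mem_enum| split; [auto| split; [exists d; reflexivity|auto]] | auto]. }
  have [L HL] := Hfin r Yr. exists L. intros v Hv. apply HL, HY, Hv.
Qed.

Section G.
Context (G : AbsGroup).
Notation "x * y" := (gmul G x y).

Lemma ginv_mul x y : ginv G (x * y) = ginv G y * ginv G x.
Proof.
  have H : (x * y) * (ginv G y * ginv G x) = gone G.
  { by rewrite -gmulA (gmulA _ y) gmulVr gmul1l gmulVr. }
  have := f_equal (fun z => ginv G (x * y) * z) H.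
  by rewrite gmulA gmulVl gmul1l gmul1r => ->.
Qed.
Lemma ginv1 : ginv G (gone G) = gone G.
Proof. by rewrite -[LHS]gmul1r gmulVl. Qed.

Context {D : finType} (gen : D -> G).
Definition wprod (l : seq D) := foldr (fun d g => gen d * g) (gone G) l.
Lemma wprod_cat l1 l2 : wprod (l1 ++ l2) = wprod l1 * wprod l2.
Proof. elim: l1 => [|d l IH] /=; [by rewrite gmul1l| by rewrite IH gmulA]. Qed.
Lemma wprod_rcons l d : wprod (rcons l d) = wprod l * gen d.
Proof. by rewrite -cats1 wprod_cat /= gmul1r. Qed.

Lemma all_words : labelled_generating_set gen -> forall g, exists l, g = wprod l.
Proof.
  move=> [_ [Hinv Hgen]]. apply Hgen.
  - split; [by exists nil|split].
    + move=> x y [l1 ->] [l2 ->]. exists (l1 ++ l2). by rewrite wprod_cat.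
    + move=> x [l ->]. elim/last_ind: l => [|l d [l' IH]].
      * exists nil. by rewrite /= ginv1.
      * have [d' Hd'] := Hinv d. exists (d' :: l').
        by rewrite wprod_rcons ginv_mul /= -IH Hd'.
  - move=> s [d <-]. exists [:: d]. by rewrite /= gmul1r.
Qed.

Definition Dist g n := (exists l, size l = n /\ g = wprod l) /\ (forall l, g = wprod l -> n <= size l).

Lemma min_ex (P : nat -> Prop) : (exists n, P n) -> exists n, P n /\ forall m, P m -> n <= m.
Proof.
  move=> [n Pn]. apply NNPP => H.
  have : forall k, forall m, m < k -> ~ P m.
  { elim => [|k IH] m Hm; first by []. move=> Pm. apply H. exists m; split => // m' Pm'.
    case: (leqP m m') => // Hlt. exfalso. apply: (IH m') => //. lia. }
  move=> /(_ n.+1 n (ltnSn n)). by [].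
Qed.

Lemma dist_ex : labelled_generating_set gen -> forall g, exists n, Dist g n.
Proof.
  move=> Hg g. have [n [[l [Hl ->]] Hmin]] := min_ex (fun n => exists l, size l = n /\ g = wprod l)
     (let (l, H) := all_words Hg g in ex_intro _ (size l) (ex_intro _ l (conj erefl H))).
  exists n. split; [by exists l|]. move=> l' Hl'. apply Hmin. by exists l'.
Qed.

Lemma dist_uniq g n m : Dist g n -> Dist g m -> n = m.
Proof.
  move=> [[l [Hl Hg]] H1] [[l' [Hl' Hg']] H2]. have := H1 _ Hg'. have := H2 _ Hg. lia.
Qed.

Lemma dist_step (Hg : labelled_generating_set gen) v d n m :
  Dist v n -> Dist (v * gen d) m -> m <= n.+1 /\ n <= m.+1.
Proof.
  move=> [[l [Hl Hv]] Hn] [[l' [Hl' Hw]] Hm]. split.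
  - have := Hm (rcons l d). rewrite wprod_rcons Hv size_rcons. move=> /(_ erefl). lia.
  - have [_ [Hinv _]] := Hg. have [d' Hd'] := Hinv d.
    have := Hn (rcons l' d'). rewrite wprod_rcons -Hw Hd' -gmulA gmulVr gmul1r size_rcons.
    move=> /(_ erefl). lia.
Qed.
End G.
Arguments Dist {G D}.
Arguments dist_ex {G D gen}.
Arguments dist_uniq {G D gen g n m}.
Arguments dist_step {G D gen}.
Arguments wprod {G D}.
Arguments wprod_rcons {G D}.

Lemma max_ex (P : nat -> Prop) N : (exists n, P n) -> (forall n, P n -> n <= N) ->
  exists n, P n /\ forall m, P m -> m <= n.
Proof.
  move=> [n0 Pn0] HN.
  have [k [Qk Hk]] := min_ex (fun k => forall m, P m -> m <= k) (ex_intro _ N HN).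
  exists k; split => //. apply NNPP => Hnk.
  case: k Qk Hk Hnk => [|k] Qk Hk Hnk.
  - apply Hnk. have := Qk _ Pn0. rewrite leqn0 => /eqP H. by rewrite -H.
  - have : k.+1 <= k; last by rewrite ltnn.
    apply Hk => m Pm. have := Qk _ Pm. rewrite leq_eqVlt => /orP [/eqP Hm|//].
    subst m. contradiction.
Qed.

Section B.
Context (G : AbsGroup) (D : finType) (gen : D -> G) (Hg : labelled_generating_set gen).

Lemma bound_list (l : list G) : exists N, forall x, List.In x l -> forall n, Dist gen x n -> n <= N.
Proof.
  elim: l => [|x l [N HN]]; first by exists 0.
  have [n0 Hn0] := dist_ex Hg x. exists (maxn n0 N) => y [<-|Hin] n Hn.
  - rewrite (dist_uniq Hn Hn0). apply leq_maxl.
  - apply: leq_trans (HN _ Hin _ Hn) (leq_maxr _ _).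
Qed.

Lemma ball_cert (X : G -> Prop) : finite_set X ->
  exists Y, (forall v, X v -> Y v) /\ exists C3 C4 C5 r, Y r /\
    (forall S, S r -> (forall v w, S v -> Y w -> downP (cayley_graph gen) C3 C4 C5 v w -> S w) ->
     forall v, Y v -> S v) /\
    (forall S, (forall v, S v -> Y v) -> (exists v, S v) ->
    exists v, S v /\ forall w, ~ (S w /\ downP (cayley_graph gen) C3 C4 C5 v w)).
Proof.
  move=> [lX HX]. have [N HN] := bound_list lX.
  set Y := fun v => exists n, Dist gen v n /\ n <= N.
  set C := fun i v => exists n, Dist gen v n /\ n %% 3 = i.
  have Hdown : forall v w n m, downP (cayley_graph gen) (C 0) (C 1) (C 2) v w ->
      Dist gen v n -> Dist gen w m -> m = n.+1.
  { move=> v w n m [[d Hd] Hc] Hv Hw. simpl in Hd. subst w.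
    have [H1 H2] := dist_step Hg _ _ _ _ Hv Hw.
    case: Hc => [[[n' [Hn' E1]] [m' [Hm' E2]]]|[[[n' [Hn' E1]] [m' [Hm' E2]]]|[[n' [Hn' E1]] [m' [Hm' E2]]]]];
      rewrite (dist_uniq Hn' Hv) in E1; rewrite (dist_uniq Hm' Hw) in E2; lia. }
  have D0 : Dist gen (gone G) 0.
  { split; [by exists nil|]. move=> l _. apply leq0n. }
  exists Y. split.
  { move=> v Xv. have [n Hn] := dist_ex Hg v. exists n. split => //. exact: HN (HX _ Xv) _ Hn. }
  exists (C 0), (C 1), (C 2), (gone G). split; [by exists 0|]. split.
  - move=> S Sr Hcl.
    have key : forall n v, Dist gen v n -> n <= N -> S v.
    { elim => [|n IH] v Hv HnN.
      - case: Hv => [[l [Hl ->]] _]. case: l Hl => //.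
      - have Hv' := Hv. case: Hv' => [[l [Hl Hvl]] _]. move: Hl Hvl. case/lastP: l => [//|l d].
        rewrite size_rcons wprod_rcons => [[Hl]] Hvl.
        have [n' Hn'] := dist_ex Hg (wprod gen l).
        have Hle : n' <= n by rewrite -Hl; apply Hn'.2.
        rewrite Hvl in Hv. have [Ha Hb] := dist_step Hg _ _ _ _ Hn' Hv.
        have En : n' = n by lia. subst n'.
        apply (Hcl (wprod gen l)); [apply: IH; [exact Hn'| lia]| rewrite Hvl; exists n.+1; split => // | ].
        rewrite Hvl. split; first by exists d.
        have Hm : n %% 3 = 0 \/ n %% 3 = 1 \/ n %% 3 = 2 by lia.
        case: Hm => [E|[E|E]]; [left|right;left|right;right]; split;
          (exists n; split => //; lia) || (exists n.+1; split => //; lia). }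
    move=> v [n [Hn HnN]]. exact: key Hn HnN.
  - move=> S HSY Hne.
    have [k [[v [Sv Hvk]] Hmax]] := max_ex (fun k => exists v, S v /\ Dist gen v k) N
      (let (v, Sv) := Hne in let (n, H) := HSY v Sv in ex_intro _ n (ex_intro _ v (conj Sv (proj1 H))))
      (fun n '(ex_intro v (conj Sv Hvn)) => let (n', H) := HSY v Sv in
         eq_ind n' (fun z => z <= N) (proj2 H) n (dist_uniq (proj1 H) Hvn)).
    exists v. split => // w [Sw Hd].
    have [m [Hm _]] := HSY w Sw. have E := Hdown _ _ _ _ Hd Hvk Hm.
    have := Hmax m (ex_intro _ w (conj Sw Hm)). lia.
Qed.
End B.

Theorem mainTheorem9 :
  forall Delta : finType,
  exists Psi : mso unit Delta,
    (forall n, ~ fo_free Psi n) /\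
    (forall n, so_free Psi n -> n = 0) /\
    forall (G : AbsGroup) (gen : Delta -> G),
      labelled_generating_set gen ->
      forall (a1 : nat -> G) (a2 : nat -> G -> Prop),
        sat (cayley_graph gen) a1 a2 Psi <-> infinite_set (a2 0).
Proof.
  intros D. exists (@Psi D). split; [apply Psi_fo| split; [apply Psi_so|]].
  intros G gen Hg a1 a2. rewrite (sat_Psi (cayley_graph gen)). unfold infinite_set. split.
  - intros H Hfin. apply H. exact (@ball_cert G D gen Hg _ Hfin).
  - intros Hinf [Y [HXY [C3 [C4 [C5 [r [Yr [HR HW]]]]]]]]. apply Hinf.
    have [L HL] := @cert_finite G D gen Y C3 C4 C5 r Yr HR HW. exists L; auto.
Qed.
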